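(* Let $T$ be a tree. Then $\mathcal{Z}^{\mathrm{TE}}_-(T)$ is connected.
   Context: Skew forcing: vertices are colored blue or white; if any vertex $u$ (blue or white) has exactly one white neighbor $v$, then $u$ may force $v$ to become blue. A skew forcing set is a (possibly empty) set of initially blue vertices from which repeated application of this rule turns every vertex blue; $\mathrm{Z}_-(G)$ is the minimum size of a skew forcing set. $\mathcal{Z}^{\mathrm{TE}}_-(G)$ has as vertices the minimum skew forcing sets of $G$, with $S_1S_2$ an edge iff $S_1\setminus S_2=\{v_1\}$ and $S_2\setminus S_1=\{v_2\}$ for some vertices $v_1,v_2$. *)

(* Defs.v *)
From mathcomp Require Import all_boot.
Set Implicit Arguments. Unset Strict Implicit. Unset Printing Implicit Defensive.

Section SkewForcing.
Variables (T : finType) (e : rel T).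

Definition simple_graph : Prop := symmetric e /\ irreflexive e.

Definition graph_connected : Prop := forall x y : T, connect e x y.

Definition acyclic : Prop := forall c : seq T, uniq c -> 3 <= size c -> ~~ cycle e c.

Definition is_tree : Prop := [/\ simple_graph, graph_connected & acyclic].

(* One application of the skew forcing rule: some vertex u (blue or white)
   has exactly one white neighbor v, and v becomes blue. *)
Definition skew_force_step : rel {set T} := fun B B' =>
  [exists u : T, exists v : T,
     ([set w | e u w] :&: ~: B == [set v]) && (B' == v |: B)].

Definition skew_forcing_set (S : {set T}) : bool :=
  connect skew_force_step S setT.

Definition min_skew_forcing_set (S : {set T}) : bool :=
  skew_forcing_set S &&
  [forall S' : {set T}, skew_forcing_set S' ==> (#|S| <= #|S'|)].

Definition ZTE_adj : rel {set T} := fun S1 S2 =>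
  [&& min_skew_forcing_set S1, min_skew_forcing_set S2,
      [exists v1 : T, S1 :\: S2 == [set v1]] &
      [exists v2 : T, S2 :\: S1 == [set v2]]].

Definition ZTE_connected : Prop :=
  forall S1 S2 : {set T}, min_skew_forcing_set S1 -> min_skew_forcing_set S2 ->
    connect ZTE_adj S1 S2.

End SkewForcing.

(* Main.v *)
Require Import Defs.
From mathcomp Require Import all_boot zify.
Set Implicit Arguments. Unset Strict Implicit. Unset Printing Implicit Defensive.

Lemma connect_ind' (A : finType) (r : rel A) (P : A -> A -> Prop) :
  (forall x, P x x) ->
  (forall x y z, r x y -> connect r y z -> P y z -> P x z) ->
  forall x y, connect r x y -> P x y.
Proof.
move=> H0 HS x y /connectP [p]; elim: p x => [|a p IH] x /=.
  by move=> _ ->.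
move=> /andP [rxa pa] ly; apply: (HS x a y rxa); last exact: IH.
by apply/connectP; exists p.
Qed.

Definition wN (T : finType) (e : rel T) (U B : {set T}) (u : T) :=
  [set w in U | e u w] :\: B.

Definition stepU (T : finType) (e : rel T) (U : {set T}) : rel {set T} :=
  fun B B' => [exists u in U, exists v, (wN e U B u == [set v]) && (B' == v |: B)].

Definition fsU (T : finType) (e : rel T) (U S : {set T}) :=
  (S \subset U) && connect (stepU e U) S U.

Definition minU (T : finType) (e : rel T) (U S : {set T}) :=
  fsU e U S && [forall S' : {set T}, fsU e U S' ==> (#|S| <= #|S'|)].

Definition adjU (T : finType) (e : rel T) (U : {set T}) : rel {set T} :=
  fun S1 S2 => [&& minU e U S1, minU e U S2,
      [exists v1 : T, S1 :\: S2 == [set v1]] &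
      [exists v2 : T, S2 :\: S1 == [set v2]]].

Lemma step_sub (T : finType) (e : rel T) U B X : stepU e U B X -> B \subset X.
Proof.
by case/existsP=> u /andP [_ /existsP [v /andP [_ /eqP ->]]]; apply: subsetUr.
Qed.

Lemma conn_sub (T : finType) (e : rel T) U B X : connect (stepU e U) B X -> B \subset X.
Proof.
move: B X; apply: connect_ind' => // x y z /step_sub h1 _ h2.
exact: subset_trans h1 h2.
Qed.

Lemma step_mono (T : finType) (e : rel T) (U B B' X : {set T}) :
  stepU e U B X -> B \subset B' -> connect (stepU e U) B' (X :|: B').
Proof.
case/existsP=> u /andP [uU /existsP [v /andP [/eqP hw /eqP ->]]] sBB.
have vw : v \in wN e U B u by rewrite hw set11.
case vB: (v \in B').
  rewrite -setUA (setUidPr sBB) (setUidPr _) ?sub1set //.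
apply: connect1; apply/existsP; exists u; rewrite uU; apply/existsP; exists v.
rewrite -setUA (setUidPr sBB) eqxx andbT; apply/eqP/setP=> w.
rewrite !inE; apply/idP/idP.
  move=> /andP [wB wU]; have : w \in wN e U B u.
    rewrite !inE wU andbT; apply: contra wB; exact: (subsetP sBB).
  by rewrite hw inE.
move/eqP->; move: vw; rewrite !inE => /andP [_ ->]; by rewrite vB.
Qed.

Lemma conn_mono (T : finType) (e : rel T) (U B B' X : {set T}) :
  connect (stepU e U) B X -> B \subset B' -> connect (stepU e U) B' (X :|: B').
Proof.
move=> c; move: B X c B'; apply: connect_ind' => [x|x y z sxy cyz IH] B' sB.
  by rewrite (setUidPr sB).
have c1 := step_mono sxy sB.
have := IH (y :|: B') (subsetUl _ _).
have syz := conn_sub cyz.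
rewrite setUA (setUidPl syz) => c2; exact: connect_trans c1 c2.
Qed.

Lemma size_le_card (T : finType) (U : {set T}) (s : seq T) :
  uniq s -> all (mem U) s -> size s <= #|U|.
Proof.
move=> /card_uniqP <- /allP ha; apply: subset_leq_card; apply/subsetP => z zs.
exact: ha.
Qed.

Lemma noext_leaf (T : finType) (e : rel T) (U : {set T}) x y s :
  symmetric e -> irreflexive e -> acyclic e ->
  uniq (x :: y :: s) -> y \in U -> path e x (y :: s) ->
  (forall w, w \in U -> e x w -> w \in x :: y :: s) ->
  [set w in U | e x w] = [set y].
Proof.
move=> sym irr; rewrite /acyclic => acyc hu yU hp hn; apply/setP => w; rewrite !inE.
apply/idP/idP; last first.
  by move/eqP->; rewrite yU; move: hp => /= /andP [].
move=> /andP [wU exw]; have := hn w wU exw.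
rewrite inE; case/orP.
  by move/eqP=> ewx; move: exw; rewrite ewx irr.
rewrite inE; case/orP => // ws.
case wy: (w == y) => //.
exfalso.
clear hn; have ws2 : w \in s by []. clear ws; move: hu hp; case/splitPr: ws2 => s1 s2 hu hp.
have hc : cycle e (x :: y :: rcons s1 w).
  rewrite /cycle /= !rcons_path.
  move: hp; rewrite /= cat_path /= => /and4P [-> -> -> _] /=.
  by rewrite last_rcons sym exw.
have hu2 : uniq (x :: y :: rcons s1 w).
  move: hu; rewrite /= -cats1 !cat_uniq !mem_cat /= !inE.
  rewrite mem_cat !inE !negb_or /= !andbT.
  move=> /andP [/and4P [h1 h2 h3 _] /and5P [/and3P [h4 h5 _] h6 /andP [h7 _] _ _]]; by rewrite mem_cat inE negb_or h1 h2 h3 h4 h5 h6 h7.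
have := acyc _ hu2; rewrite [size _]/= size_rcons => /(_ isT) /negP; by apply.
Qed.

Lemma leaf_aux (T : finType) (e : rel T) (U : {set T}) :
  symmetric e -> irreflexive e -> acyclic e ->
  forall k x y s, #|U| - size s <= k -> uniq (x :: y :: s) ->
    all (mem U) (x :: y :: s) -> path e x (y :: s) ->
    exists l p, l \in U /\ [set w in U | e l w] = [set p].
Proof.
move=> sym irr acyc; elim=> [|k IH] x y s hk hu ha hp.
- have hs : #|U| <= size s by rewrite -subn_eq0 -leqn0.
  case: (boolP [exists w in U, e x w && (w \notin x :: y :: s)]).
    case/existsP => w /and3P [wU _ wn].
    have : size (w :: x :: y :: s) <= #|U|.
      by apply: size_le_card; rewrite /= ?wn ?hu //= wU.
    rewrite /= => h; exfalso; have := leq_trans h hs; by move=> /ltnW/ltnW; rewrite ltnn.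
  move=> hn; exists x, y; split; first by move: ha => /= /andP [].
  have yU : y \in U by move: ha => /= /and3P [].
  apply: (noext_leaf sym irr acyc hu yU hp) => w wU exw; apply: contraNT hn => wn.
  by apply/existsP; exists w; rewrite wU exw wn.
- case: (boolP [exists w in U, e x w && (w \notin x :: y :: s)]).
    case/existsP => w /and3P [wU exw wn].
    apply: (IH w x (y :: s)).
    + rewrite /= subnS; move: hk; case: (#|U| - size s) => [|n] //=.
    + by apply/andP; split.
    + by rewrite /= wU.
    + by rewrite /= sym exw.
  move=> hn; exists x, y; split; first by move: ha => /= /andP [].
  have yU : y \in U by move: ha => /= /and3P [].
  apply: (noext_leaf sym irr acyc hu yU hp) => w wU exw; apply: contraNT hn => wn.
  by apply/existsP; exists w; rewrite wU exw wn.
Qed.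

Lemma leaf_or_noedge (T : finType) (e : rel T) (U : {set T}) :
  symmetric e -> irreflexive e -> acyclic e ->
  (exists l p, l \in U /\ [set w in U | e l w] = [set p]) \/
  (forall u v, u \in U -> v \in U -> ~~ e u v).
Proof.
move=> sym irr acyc.
case: (boolP [exists u in U, exists v in U, e u v]).
  case/existsP=> u /andP [uU /existsP [v /andP [vU euv]]]; left.
  apply: (@leaf_aux T e U sym irr acyc #|U| u v [::]) => //=.
  - by rewrite subn0.
  - by rewrite andbT inE; apply: contraTneq euv => ->; rewrite irr.
  - by rewrite uU vU.
  - by rewrite euv.
move=> h; right => u v uU vU; apply: contra h => euv.
by apply/existsP; exists u; rewrite uU; apply/existsP; exists v; rewrite vU.
Qed.

Lemma leaf_facts (T : finType) (e : rel T) (U : {set T}) l p :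
  symmetric e -> irreflexive e -> [set w in U | e l w] = [set p] ->
  [/\ p \in U, e l p, l != p & forall u, u \in U -> e u l -> u = p].
Proof.
move=> sym irr hl.
have : p \in [set w in U | e l w] by rewrite hl set11.
rewrite inE => /andP [pU elp]; split => //.
  by apply: contraTneq elp => ->; rewrite irr.
move=> u uU eul; have : u \in [set w in U | e l w] by rewrite inE uU sym.
by rewrite hl inE => /eqP.
Qed.

Lemma up_conn (T : finType) (e : rel T) (U : {set T}) l p :
  symmetric e -> irreflexive e -> [set w in U | e l w] = [set p] ->
  forall B X, connect (stepU e (U :\ l :\ p)) B X ->
              connect (stepU e U) (p |: B) (p |: X).
Proof.
move=> sym irr hl; have [pU elp nlp nb] := leaf_facts sym irr hl.
apply: connect_ind' => // B Y X st _ IH; apply: connect_trans IH.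
apply: connect1.
move: st => /existsP [u /andP [uU' /existsP [v /andP [/eqP hw /eqP ->]]]].
move: (uU'); rewrite !inE => /and3P [up ul uU].
apply/existsP; exists u; rewrite uU; apply/existsP; exists v.
rewrite setUCA eqxx andbT -hw; apply/eqP/setP => w; rewrite !inE.
case wl: (w == l); last by case: (w == p); rewrite ?andbF ?andbT.
rewrite (eqP wl) /= !andbF; apply/negP => /and3P [_ _ eul].
by move: (nb u uU eul) up => ->; rewrite eqxx.
Qed.

Lemma fs_lift (T : finType) (e : rel T) (U : {set T}) l p S :
  symmetric e -> irreflexive e -> l \in U -> [set w in U | e l w] = [set p] ->
  fsU e (U :\ l :\ p) S -> fsU e U S.
Proof.
move=> sym irr lU hl; have [pU elp nlp nb] := leaf_facts sym irr hl.
case/andP => sS cS; have sU : S \subset U.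
  apply: subset_trans sS _; apply/subsetP => w; rewrite !inE; by case/and3P.
rewrite /fsU sU /=.
have pS : p \notin S by apply/negP => /(subsetP sS); rewrite !inE eqxx.
have c1 : connect (stepU e U) S (p |: S).
  apply: connect1; apply/existsP; exists l; rewrite lU; apply/existsP; exists p.
  rewrite eqxx andbT /wN hl; apply/eqP/setP => w; rewrite !inE.
  by case: (w =P p) => [->|]; rewrite ?pS ?andbF.
have c2 := up_conn sym irr hl cS.
apply: connect_trans c1 (connect_trans c2 _).
apply: connect1; apply/existsP; exists p; rewrite pU; apply/existsP; exists l.
apply/andP; split; apply/eqP/setP => w; rewrite !inE.
  case: (w =P l) => [->|wl]; first by rewrite lU sym elp (negbTE nlp).
  by case: (w =P p) => //= _; case: (w \in U); rewrite ?andbF ?andbT.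
case: (w =P l) => [->|wl] /=; first exact: lU.
by case: (w =P p) => [->|] //=; rewrite pU.
Qed.

Lemma wN_pt (T : finType) (e : rel T) (U B : {set T}) u v :
  wN e U B u = [set v] ->
  forall w, [&& w \notin B, w \in U & e u w] = (w == v).
Proof. by move=> /setP h w; have := h w; rewrite !inE. Qed.

Lemma downH (T : finType) (e : rel T) (U : {set T}) l p :
  symmetric e -> irreflexive e -> l \in U -> [set w in U | e l w] = [set p] ->
  forall B X, connect (stepU e U) B X ->
   (l \in B -> [set w in U | e p w] :\ l \subset B) ->
   connect (stepU e (U :\ l :\ p)) (B :&: (U :\ l :\ p)) (X :&: (U :\ l :\ p)).
Proof.
move=> sym irr lU hl; have [pU elp nlp nb] := leaf_facts sym irr hl.
set U' := U :\ l :\ p.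
apply: (@connect_ind' _ (stepU e U) (fun B X => (l \in B -> [set w in U | e p w] :\ l \subset B) ->
   connect (stepU e U') (B :&: U') (X :&: U'))) => // B Y X st _ IH IB.
move: st => /existsP [u /andP [uU /existsP [v /andP [/eqP hw /eqP YE]]]].
have hv := wN_pt hw; have := hv v; rewrite eqxx => /and3P [vB vU euv].
have IY : l \in Y -> [set w in U | e p w] :\ l \subset Y.
  rewrite YE !inE => /orP [/eqP lv | lB]; last first.
    apply: (subset_trans (IB lB)); exact: subsetUr.
  have up : u = p by apply: nb; rewrite // lv.
  apply/subsetP => w; rewrite !inE => /and3P [wl wU epw].
  apply/orP; right; apply: contraNT wl => wB.
  by rewrite lv -hv wB wU up epw.
apply: connect_trans (IH IY).
case vU': (v \in U'); last first.
  have -> : Y :&: U' = B :&: U'.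
    apply/setP => w; rewrite YE !inE; case: (w =P v) => [->|] //=.
    by move: vU'; rewrite /U' !inE => ->; rewrite (negbTE vB).
  exact: connect0.
have [vl vp] : v != l /\ v != p by move: vU'; rewrite /U' !inE => /and3P [-> ->].
have ul : u != l.
  apply: contraNneq vp => ul.
  have : v \in [set w in U | e l w] by rewrite inE vU -ul.
  by rewrite hl inE.
have up : u != p.
  apply: contraNneq vB => up.
  have lB : l \in B.
    have := hv l; rewrite eq_sym (negbTE vl) lU /= up sym elp andbT.
    by move/negbFE.
  apply: (subsetP (IB lB)); by rewrite !inE vl vU -up euv.
have uU' : u \in U' by rewrite /U' !inE up ul uU.
apply: connect1; apply/existsP; exists u; rewrite uU'; apply/existsP; exists v.
apply/andP; split; apply/eqP/setP => w.
  rewrite /wN [w \in [set v]]inE; case: (w =P v) => [->|/eqP wv].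
    by rewrite !inE (negbTE vB) vl vp vU euv.
  have := hv w; rewrite (negbTE wv) !inE.
  by case: (w \in B); case: (w \in U); case: (e u w); case: (w == p); case: (w == l).
rewrite YE !inE; case: (w =P v) => [->|] //=.
by move: vU'; rewrite /U' !inE => ->.
Qed.

Lemma step_restrict (T : finType) (e : rel T) (U U' B : {set T}) u v :
  (forall w, [&& w \notin B, w \in U & e u w] = (w == v)) ->
  u \in U' -> v \in U' -> U' \subset U ->
  stepU e U' (B :&: U') ((v |: B) :&: U').
Proof.
move=> hv uU' vU' sU.
apply/existsP; exists u; rewrite uU'; apply/existsP; exists v.
apply/andP; split; apply/eqP/setP => w; rewrite !inE.
  case: (boolP (w \in U')) => wU' /=; last first.
    by rewrite andbF; case: (w =P v) wU' => // ->; rewrite vU'.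
  by rewrite andbT -hv (subsetP sU w wU').
by case: (w =P v) => [->|]; rewrite ?vU' /= ?orbT.
Qed.

Lemma downG (T : finType) (e : rel T) (U : {set T}) l p :
  symmetric e -> irreflexive e -> l \in U -> [set w in U | e l w] = [set p] ->
  forall B X, connect (stepU e U) B X -> l \in B -> p \in B ->
   connect (stepU e (U :\ l :\ p)) (B :&: (U :\ l :\ p)) (X :&: (U :\ l :\ p)) \/
   exists2 q, q \in U :\ l :\ p &
     connect (stepU e (U :\ l :\ p)) (q |: (B :&: (U :\ l :\ p))) (X :&: (U :\ l :\ p)).
Proof.
move=> sym irr lU hl; have [pU elp nlp nb] := leaf_facts sym irr hl.
set U' := U :\ l :\ p.
have sU : U' \subset U by apply/subsetP => w; rewrite /U' !inE => /and3P [].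
apply: (@connect_ind' _ (stepU e U) (fun B X => l \in B -> p \in B ->
   connect (stepU e U') (B :&: U') (X :&: U') \/
   exists2 q, q \in U' & connect (stepU e U') (q |: (B :&: U')) (X :&: U'))).
  by move=> B _ _; left.
move=> B Y X st cYX IH lB pB.
move: st => /existsP [u /andP [uU /existsP [v /andP [/eqP hw /eqP YE]]]].
have hv := wN_pt hw; have := hv v; rewrite eqxx => /and3P [vB vU euv].
have vU' : v \in U'.
  rewrite /U' !inE vU andbT; apply/andP; split.
    by apply: contraNneq vB => ->.
  by apply: contraNneq vB => ->.
have YU : Y :&: U' = v |: (B :&: U').
  by apply/setP => w; rewrite YE !inE; case: (w =P v) => [->|] //=; move: vU'; rewrite /U' !inE.
have lY : l \in Y by rewrite YE !inE lB orbT.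
have pY : p \in Y by rewrite YE !inE pB orbT.
case: (u =P l) => [ul|/eqP ul].
  have : v \in [set w in U | e l w] by rewrite inE vU -ul euv.
  by rewrite hl inE => /eqP vp; move: vB; rewrite vp pB.
case: (u =P p) => [up|/eqP up].
  right; exists v => //; rewrite -YU.
  apply: (downH sym irr lU hl cYX) => _.
  apply/subsetP => w; rewrite !inE => /and3P [wl wU epw].
  rewrite YE !inE; case: (boolP (w \in B)) => wB; rewrite ?orbT //.
  by rewrite orbF -hv wB wU up epw.
have uU' : u \in U' by rewrite /U' !inE up ul uU.
have st' : stepU e U' (B :&: U') (Y :&: U') by rewrite YE; exact: step_restrict hv uU' vU' sU.
case: (IH lY pY) => [c|[q qU' c]].
  by left; apply: connect_trans (connect1 st') c.
right; exists q => //.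
have := step_mono st' (subsetUr [set q] (B :&: U')).
have -> : (Y :&: U') :|: (q |: (B :&: U')) = q |: (Y :&: U').
  by rewrite YU setUCA -setUA setUid.
by move=> c1; apply: connect_trans c1 c.
Qed.

Lemma sub_rem (T : finType) (U : {set T}) l p : U :\ l :\ p \subset U.
Proof. by apply/subsetP => w; rewrite !inE => /and3P []. Qed.

Lemma fs_downA (T : finType) (e : rel T) (U : {set T}) l p S :
  symmetric e -> irreflexive e -> l \in U -> [set w in U | e l w] = [set p] ->
  fsU e U S -> l \notin S -> p \notin S -> fsU e (U :\ l :\ p) S.
Proof.
move=> sym irr lU hl /andP [sS cS] lS pS.
have sS' : S \subset U :\ l :\ p.
  apply/subsetP => w wS; rewrite !inE (subsetP sS w wS) andbT.
  by apply/andP; split; [apply: contraNneq pS => <- | apply: contraNneq lS => <-].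
rewrite /fsU sS' /=.
have := downH sym irr lU hl cS; rewrite (negbTE lS) => /(_ (fun x => ltac:(done))).
by rewrite (setIidPl sS') (setIidPr (sub_rem U l p)).
Qed.

Lemma fs_downB (T : finType) (e : rel T) (U : {set T}) l p S :
  symmetric e -> irreflexive e -> l \in U -> [set w in U | e l w] = [set p] ->
  fsU e U S -> (l \in S) || (p \in S) ->
  fsU e (U :\ l :\ p) (S :&: (U :\ l :\ p)) \/
  exists2 q, q \in U :\ l :\ p & q \notin S /\ fsU e (U :\ l :\ p) (q |: (S :&: (U :\ l :\ p))).
Proof.
move=> sym irr lU hl /andP [sS cS] _.
have [pU elp nlp nb] := leaf_facts sym irr hl.
set U' := U :\ l :\ p.
have sB : S \subset l |: (p |: S) by rewrite setUA subsetUr.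
have := conn_mono cS sB.
have -> : U :|: (l |: (p |: S)) = U.
  apply/setUidPl; apply/subsetP => w; rewrite !inE.
  by case/or3P => [/eqP ?|/eqP ?|/(subsetP sS)] //; subst.
move=> c.
have BU : (l |: (p |: S)) :&: U' = S :&: U'.
  by apply/setP => w; rewrite /U' !inE; case: (w == l); case: (w == p); rewrite /= ?andbF.
have lB : l \in l |: (p |: S) by rewrite !inE eqxx.
have pB : p \in l |: (p |: S) by rewrite !inE eqxx orbT.
have sU' : S :&: U' \subset U' by apply: subsetIr.
case: (downG sym irr lU hl c lB pB) => [c'|[q qU' c']]; rewrite -/U' BU (setIidPr (sub_rem U l p)) in c'.
  by left; rewrite /fsU sU' c'.
case: (boolP (q \in S)) => qS.
  have qq : q |: (S :&: U') = S :&: U' by apply/setUidPr; rewrite sub1set inE qS qU'.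
  by left; rewrite /fsU sU' -qq.
right; exists q => //; split => //; rewrite /fsU c' andbT.
by rewrite subUset sub1set qU'.
Qed.

Lemma proper_lt (T : finType) (S V : {set T}) x :
  x \in S -> x \notin V -> #|S :&: V| < #|S|.
Proof.
move=> xS xV; apply: proper_card; apply/properP; split; first exact: subsetIl.
by exists x => //; rewrite inE (negbTE xV) andbF.
Qed.

Lemma lp_out (T : finType) (U S : {set T}) l p :
  (l \in S) || (p \in S) -> #|S :&: (U :\ l :\ p)| < #|S|.
Proof.
case/orP => h; apply: (proper_lt h); by rewrite !inE eqxx ?andbF.
Qed.

Lemma exists_small (T : finType) (e : rel T) (U : {set T}) l p S :
  symmetric e -> irreflexive e -> l \in U -> [set w in U | e l w] = [set p] ->
  fsU e U S -> exists S', fsU e (U :\ l :\ p) S' /\ #|S'| <= #|S|.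
Proof.
move=> sym irr lU hl fS.
case: (boolP ((l \in S) || (p \in S))) => h.
  have hlt := lp_out U h.
  case: (fs_downB sym irr lU hl fS h) => [f|[q _ [_ f]]].
    by exists (S :&: (U :\ l :\ p)); split => //; apply: ltnW.
  exists (q |: (S :&: (U :\ l :\ p))); split => //.
  by rewrite cardsU1; case: (q \notin _) => //=; apply: ltnW.
move: h; rewrite negb_or => /andP [lS pS].
by exists S; split => //; apply: fs_downA.
Qed.

Lemma min_lift (T : finType) (e : rel T) (U : {set T}) l p S :
  symmetric e -> irreflexive e -> l \in U -> [set w in U | e l w] = [set p] ->
  minU e (U :\ l :\ p) S -> minU e U S.
Proof.
move=> sym irr lU hl /andP [fS /forallP mS].
rewrite /minU (fs_lift sym irr lU hl fS) /=; apply/forallP => S'; apply/implyP => fS'.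
have [S'' [f'' le'']] := exists_small sym irr lU hl fS'.
by apply: leq_trans le''; move/implyP: (mS S''); apply.
Qed.

Lemma min_downA (T : finType) (e : rel T) (U : {set T}) l p S :
  symmetric e -> irreflexive e -> l \in U -> [set w in U | e l w] = [set p] ->
  minU e U S -> l \notin S -> p \notin S -> minU e (U :\ l :\ p) S.
Proof.
move=> sym irr lU hl /andP [fS /forallP mS] lS pS.
rewrite /minU (fs_downA sym irr lU hl fS lS pS) /=; apply/forallP => S'; apply/implyP => fS'.
by move/implyP: (mS S'); apply; apply: fs_lift fS'.
Qed.

Lemma min_norm (T : finType) (e : rel T) (U : {set T}) l p S :
  symmetric e -> irreflexive e -> l \in U -> [set w in U | e l w] = [set p] ->
  minU e U S -> exists S', [/\ minU e U S', l \notin S', p \notin S' &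
                             S' = S \/ adjU e U S S'].
Proof.
move=> sym irr lU hl mS.
have /andP [fS /forallP aS] := mS.
case: (boolP ((l \in S) || (p \in S))) => h; last first.
  by move: h; rewrite negb_or => /andP [lS pS]; exists S; split => //; left.
set U' := U :\ l :\ p.
have hlt : #|S :&: U'| < #|S| := lp_out U h.
case: (fs_downB sym irr lU hl fS h) => [f|[q qU' [qS f]]].
  have := implyP (aS _) (fs_lift sym irr lU hl f).
  by rewrite leqNgt hlt.
set X := q |: (S :&: U').
have qX : q \notin S :&: U' by rewrite inE (negbTE qS).
have cX : #|X| = #|S :&: U'|.+1 by rewrite /X cardsU1 qX.
have fXU := fs_lift sym irr lU hl f.
have leSX := implyP (aS _) fXU.
have eSX : #|S| = #|X|.
  by apply/eqP; rewrite eqn_leq leSX cX.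
have mX : minU e U X.
  rewrite /minU fXU /=; apply/forallP => S'; apply/implyP => fS'.
  by rewrite -eSX; exact: (implyP (aS _) fS').
have sXU : X \subset U' by rewrite /X subUset sub1set qU' subsetIr.
have lX : l \notin X by apply/negP => /(subsetP sXU); rewrite !inE eqxx /= ?andbF.
have pX : p \notin X by apply/negP => /(subsetP sXU); rewrite !inE eqxx /= ?andbF.
exists X; split => //; right.
rewrite /adjU mS mX /=.
have c1 : #|S :\: U'| == 1.
  by have := cardsID U' S; rewrite eSX cX -addn1 => /eqP; rewrite eqn_add2l.
have [y hy] := cards1P c1.
apply/andP; split; apply/existsP.
  exists y; rewrite -hy; apply/eqP/setP => w; rewrite !inE.
  by case: (w =P q) => [->|]; rewrite ?(negbTE qS) ?andbF //= => _; case: (w \in S); rewrite ?andbF ?andbT.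
exists q; apply/eqP/setP => w; rewrite !inE.
by case: (w =P q) => [->|]; rewrite ?(negbTE qS) //= => _; case: (w \in S).
Qed.

Lemma noedge_fs (T : finType) (e : rel T) (U S : {set T}) :
  (forall u v, u \in U -> v \in U -> ~~ e u v) -> fsU e U S -> S = U.
Proof.
move=> ne /andP [_ /connectP [[|x q] /= hp ->]] //.
move: hp => /andP [/existsP [u /andP [uU /existsP [v /andP [/eqP hw _]]]] _].
have := wN_pt hw v; rewrite eqxx => /and3P [_ vU euv].
by move: (ne u v uU vU); rewrite euv.
Qed.

Lemma adj_sym (T : finType) (e : rel T) (U S1 S2 : {set T}) :
  adjU e U S1 S2 -> adjU e U S2 S1.
Proof. by case/and4P => a b c d; apply/and4P; split. Qed.

Lemma main_conn (T : finType) (e : rel T) :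
  symmetric e -> irreflexive e -> acyclic e ->
  forall n (U : {set T}), #|U| <= n -> forall S1 S2,
    minU e U S1 -> minU e U S2 -> connect (adjU e U) S1 S2.
Proof.
move=> sym irr acyc; elim=> [|n IH] U hU S1 S2 m1 m2.
- case: (leaf_or_noedge U sym irr acyc) => [[l [p [lU _]]]|ne].
    by move: hU; rewrite (cardD1 l) lU.
  have /andP [f1 _] := m1; have /andP [f2 _] := m2.
  by rewrite (noedge_fs ne f1) (noedge_fs ne f2).
case: (leaf_or_noedge U sym irr acyc) => [[l [p [lU hl]]]|ne]; last first.
  have /andP [f1 _] := m1; have /andP [f2 _] := m2.
  by rewrite (noedge_fs ne f1) (noedge_fs ne f2).
have hU' : #|U :\ l :\ p| <= n.
  have h1 := cardsD1 l U; rewrite lU in h1.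
  have h2 := subset_leq_card (subD1set (U :\ l) p).
  apply: leq_trans h2 _; rewrite -ltnS; apply: leq_trans hU; by rewrite h1.
have [X1 [mX1 lX1 pX1 h1]] := min_norm sym irr lU hl m1.
have [X2 [mX2 lX2 pX2 h2]] := min_norm sym irr lU hl m2.
have c12 : connect (adjU e U) X1 X2.
  have := IH _ hU' X1 X2 (min_downA sym irr lU hl mX1 lX1 pX1) (min_downA sym irr lU hl mX2 lX2 pX2).
  apply: connect_sub => x y /and4P [a b c d]; apply: connect1.
  by rewrite /adjU (min_lift sym irr lU hl a) (min_lift sym irr lU hl b) c d.
apply: connect_trans (connect_trans _ c12) _.
  by case: h1 => [->|a]; [exact: connect0 | exact: connect1].
by case: h2 => [->|a]; [exact: connect0 | apply: connect1; exact: adj_sym].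
Qed.

Lemma stepT (T : finType) (e : rel T) : stepU e setT =2 skew_force_step e.
Proof.
move=> B B'; rewrite /stepU /skew_force_step.
apply: eq_existsb => u; rewrite in_setT /=; apply: eq_existsb => v.
have -> : wN e setT B u = [set w | e u w] :&: ~: B.
  by apply/setP => w; rewrite !inE andbC.
by [].
Qed.

Lemma fsT (T : finType) (e : rel T) S : fsU e setT S = skew_forcing_set e S.
Proof. by rewrite /fsU subsetT /skew_forcing_set (eq_connect (stepT e)). Qed.

Lemma minT (T : finType) (e : rel T) S : minU e setT S = min_skew_forcing_set e S.
Proof.
rewrite /minU /min_skew_forcing_set fsT; congr (_ && _).
by apply: eq_forallb => S'; rewrite fsT.
Qed.

Theorem theorem5p26 (T : finType) (e : rel T) :
  is_tree e -> ZTE_connected e.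
Proof.
case=> [[sym irr] _ acyc] S1 S2 m1 m2.
have eqa : adjU e setT =2 ZTE_adj e.
  by move=> x y; rewrite /adjU /ZTE_adj !minT.
rewrite -(eq_connect eqa).
apply: (main_conn sym irr acyc (leqnn _)); by rewrite minT.
Qed.
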